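(* Consider the power network system described in the context and an equilibrium $(\eta^*,\omega^*,p^{M,*},p^{c,*},\psi^* )$ of it for some constant switching vector $\sigma^*\in\{0,1\}^{|\tilde{\mathcal L}|}$; write $p^{c,*}$ also for the common value of the (equal) entries of the equilibrium power command vector. Suppose $\kappa_j=q_j^{-1}$ for all $j\in\mathcal N$, and suppose there exist $\theta\ge 0$ and $\zeta\in\mathbb R$ such that $p^{c,*}-\theta/K\le\zeta\le p^{c,*}$ and, for every $(l,j)\in\tilde{\mathcal L}$, $\sigma^*_{l,j}\in\{0\}$ if $\zeta>c_{l,j}/\overline d_{l,j}$; $\sigma^*_{l,j}\in\{0,\rho_{l,j}\}$ if $\zeta=c_{l,j}/\overline d_{l,j}$; $\sigma^*_{l,j}\in\{\rho_{l,j}\}$ if $|\zeta|<c_{l,j}/\overline d_{l,j}$; $\sigma^*_{l,j}\in\{\rho_{l,j},1\}$ if $\zeta=-c_{l,j}/\overline d_{l,j}$; $\sigma^*_{l,j}\in\{1\}$ if $\zeta<-c_{l,j}/\overline d_{l,j}$. Then $(p^{M,*},\sigma^* )$ is $\epsilon$-optimal for the H-OSC problem with $\epsilon=3\theta^2/(2K)$.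
   Context: Let $(\mathcal N,\mathcal E)$ be a connected directed graph (the power network) with bus set $\mathcal N=\{1,\dots,|\mathcal N|\}$ and line set $\mathcal E$, oriented arbitrarily so that $(i,j)\in\mathcal E$ implies $(j,i)\notin\mathcal E$; $\mathcal N^p_j=\{k:(k,j)\in\mathcal E\}$, $\mathcal N^s_j=\{k:(j,k)\in\mathcal E\}$. Let $(\mathcal N,\tilde{\mathcal E})$ be a connected directed graph (communication network). For each $j\in\mathcal N$, $\mathcal L_j$ is a finite set of on-off loads and $\tilde{\mathcal L}=\{(l,j):l\in\mathcal L_j,j\in\mathcal N\}$; load $(l,j)$ has magnitude $\overline d_{l,j}>0$, switching state $\sigma_{l,j}\in\{0,1\}$, user-desired state $\rho_{l,j}\in\{0,1\}$, and a cost constant $c_{l,j}$. Constants $M_j,\gamma_j,\kappa_j,A_j,\tau_j,q_j>0$, $p^L_j\in\mathbb R$ ($j\in\mathcal N$), $B_{ij}>0$ ($(i,j)\in\mathcal E$), $\tau_{ij}>0$ ($(i,j)\in\tilde{\mathcal E}$); $K=\sum_{j\in\mathcal N}\kappa_j$. State $x=(\eta,\omega,p^M,p^c,\psi)$, dynamics: $\dot\eta_{ij}=\omega_i-\omega_j$, $(i,j)\in\mathcal E$; $M_j\dot\omega_j=p^M_j-p^L_j-A_j\omega_j-\sum_{l\in\mathcal L_j}\overline d_{l,j}\sigma_{l,j}-\sum_{k\in\mathcal N^s_j}B_{jk}\eta_{jk}+\sum_{i\in\mathcal N^p_j}B_{ij}\eta_{ij}$; $\gamma_j\dot p^M_j=-(p^M_j+\kappa_j\omega_j-\kappa_jp^c_j)$;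 $\tau_{ij}\dot\psi_{ij}=p^c_i-p^c_j$, $(i,j)\in\tilde{\mathcal E}$; $\tau_j\dot p^c_j=-p^M_j+p^L_j+\sum_{l\in\mathcal L_j}\overline d_{l,j}\sigma_{l,j}-\sum_{k:(j,k)\in\tilde{\mathcal E}}\psi_{jk}+\sum_{i:(i,j)\in\tilde{\mathcal E}}\psi_{ij}$. An equilibrium for fixed $\sigma$ is a state at which all derivatives vanish; at every equilibrium all entries of $p^{c,*}$ coincide. H-OSC problem: minimize over $p^M\in\mathbb R^{|\mathcal N|}$ and $\sigma\in\{0,1\}^{|\tilde{\mathcal L}|}$ the cost $C(p^M,\sigma)=\sum_{j\in\mathcal N}\big[\tfrac12q_j(p^M_j)^2+\sum_{l\in\mathcal L_j}C^d_{l,j}(\sigma_{l,j},\rho_{l,j})\big]$, where $C^d_{l,j}=c_{l,j}$ if $\sigma_{l,j}\ne\rho_{l,j}$ and $0$ otherwise, subject to $\sum_j p^M_j=\sum_j\big(p^L_j+\sum_{l\in\mathcal L_j}\overline d_{l,j}\sigma_{l,j}\big)$. A point $(p^M,\sigma)$ is $\epsilon$-optimal for H-OSC if $C(p^M,\sigma)\le(\text{minimum of H-OSC})+\epsilon$. *)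

(* Defs.v *)
From mathcomp Require Import all_boot all_order all_algebra.
From mathcomp Require Import reals.
Set Implicit Arguments. Unset Strict Implicit. Unset Printing Implicit Defensive.
Import Order.TTheory GRing.Theory Num.Theory.
Local Open Scope ring_scope.

(* The on-off loads form a finite type [Ld]; [bus l] is the bus j with
   l \in L_j, so L_j = [pred l | bus l == j] and ~L = Ld. *)

Definition graph_connected (n : nat) (E : rel 'I_n) : Prop :=
  forall i j : 'I_n, connect [rel a b | E a b || E b a] i j.

Definition oriented (n : nat) (E : rel 'I_n) : Prop :=
  forall i j : 'I_n, E i j -> ~~ E j i.

Record network (R : realType) (n : nat) (Ld : finType) := Network {
  E   : rel 'I_n;              (* power lines *)
  Et  : rel 'I_n;              (* communication links *)
  bus : Ld -> 'I_n;
  dbar : Ld -> R;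
  rho  : Ld -> bool;
  cost : Ld -> R;
  Mc : 'I_n -> R; gam : 'I_n -> R; kap : 'I_n -> R; Ac : 'I_n -> R;
  tauN : 'I_n -> R; q : 'I_n -> R; pL : 'I_n -> R;
  B : 'I_n -> 'I_n -> R;
  tauE : 'I_n -> 'I_n -> R
}.

Definition network_ok (R : realType) (n : nat) (Ld : finType)
    (N : network R n Ld) : Prop :=
  [/\ graph_connected (E N) /\ oriented (E N),
      graph_connected (Et N),
      (forall l, 0 < dbar N l),
      (forall j, 0 < Mc N j /\ 0 < gam N j /\ 0 < kap N j /\ 0 < Ac N j
                 /\ 0 < tauN N j /\ 0 < q N j) &
      (forall i j, E N i j -> 0 < B N i j) /\
      (forall i j, Et N i j -> 0 < tauE N i j)].

Definition Ksum (R : realType) (n : nat) (Ld : finType) (N : network R n Ld) : R :=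
  \sum_(j < n) kap N j.

Definition load_at (R : realType) (n : nat) (Ld : finType) (N : network R n Ld)
    (sigma : Ld -> bool) (j : 'I_n) : R :=
  \sum_(l | bus N l == j) dbar N l * (sigma l)%:R.

(* x = (eta, omega, pM, pc, psi) is an equilibrium for fixed sigma:
   every time derivative of the dynamics vanishes. *)
Definition equilibrium (R : realType) (n : nat) (Ld : finType) (N : network R n Ld)
    (sigma : Ld -> bool) (eta : 'I_n -> 'I_n -> R) (omega pM pc : 'I_n -> R)
    (psi : 'I_n -> 'I_n -> R) : Prop :=
  [/\ (forall i j, E N i j -> omega i - omega j = 0),
      (forall j, (pM j - pL N j - Ac N j * omega j - load_at N sigma j
                  - \sum_(k | E N j k) B N j k * eta j k
                  + \sum_(i | E N i j) B N i j * eta i j) / Mc N j = 0),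
      (forall j, - (pM j + kap N j * omega j - kap N j * pc j) / gam N j = 0),
      (forall i j, Et N i j -> (pc i - pc j) / tauE N i j = 0) &
      (forall j, (- pM j + pL N j + load_at N sigma j
                  - \sum_(k | Et N j k) psi j k
                  + \sum_(i | Et N i j) psi i j) / tauN N j = 0)].

Definition Cd (R : realType) (n : nat) (Ld : finType) (N : network R n Ld)
    (sigma : Ld -> bool) (l : Ld) : R :=
  if sigma l != rho N l then cost N l else 0.

Definition Cost (R : realType) (n : nat) (Ld : finType) (N : network R n Ld)
    (pM : 'I_n -> R) (sigma : Ld -> bool) : R :=
  \sum_(j < n) (q N j * (pM j) ^+ 2 / 2 + \sum_(l | bus N l == j) Cd N sigma l).

Definition hosc_feasible (R : realType) (n : nat) (Ld : finType) (N : network R n Ld)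
    (pM : 'I_n -> R) (sigma : Ld -> bool) : Prop :=
  \sum_(j < n) pM j = \sum_(j < n) (pL N j + load_at N sigma j).

(* (pM, sigma) is eps-optimal: its cost is at most the optimal value of H-OSC
   plus eps, i.e. at most the cost of every feasible point plus eps. *)
Definition eps_optimal (R : realType) (n : nat) (Ld : finType) (N : network R n Ld)
    (eps : R) (pM : 'I_n -> R) (sigma : Ld -> bool) : Prop :=
  forall (pM' : 'I_n -> R) (sigma' : Ld -> bool),
    hosc_feasible N pM' sigma' -> Cost N pM sigma <= Cost N pM' sigma' + eps.

Definition switch_cond (R : realType) (n : nat) (Ld : finType) (N : network R n Ld)
    (zeta : R) (sigma : Ld -> bool) (l : Ld) : Prop :=
  let r := cost N l / dbar N l in
  [/\ (zeta > r -> sigma l = false),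
      (zeta = r -> sigma l = false \/ sigma l = rho N l),
      (`|zeta| < r -> sigma l = rho N l),
      (zeta = - r -> sigma l = rho N l \/ sigma l = true) &
      (zeta < - r -> sigma l = true)].

(* Main.v *)
Require Import Defs.
From mathcomp Require Import all_boot all_order all_algebra.
From mathcomp Require Import reals ring lra.
Import Order.TTheory GRing.Theory Num.Theory.
Local Open Scope ring_scope.

Lemma aux_min (R : realType) (zeta d r : R) (s s' rh : bool) :
  0 < d ->
  (zeta > r -> s = false) ->
  (zeta = r -> s = false \/ s = rh) ->
  (`|zeta| < r -> s = rh) ->
  (zeta = - r -> s = rh \/ s = true) ->
  (zeta < - r -> s = true) ->
  zeta * d * s%:R + (if s != rh then r * d else 0) <=
  zeta * d * s'%:R + (if s' != rh then r * d else 0).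
Proof.
move=> dp h1 h2 h3 h4 h5.
case: rh h2 h3 h4; case: s h1 h5; case: s' => //= h1 h5 h2 h3 h4;
  rewrite ?mulr1 ?mulr0 ?addr0 ?add0r ?lexx //.
- rewrite ler_pM2r //.
  rewrite leNgt; apply/negP => H.
  by move: (h1 H).
- rewrite ler_pM2r //.
  rewrite leNgt; apply/negP => H.
  case: (ltgtP zeta (-r)) => Hz.
  + by move: (h5 Hz).
  + have : `|zeta| < r by rewrite ltr_norml H andbT; lra.
    by move/h3.
  + by case: (h4 Hz).
- rewrite -mulrDl pmulr_lle0 //.
  suff : zeta <= - r by lra.
  rewrite leNgt; apply/negP => H.
  case: (ltgtP zeta r) => Hz.
  + have : `|zeta| < r by rewrite ltr_norml Hz andbT; lra.
    by move/h3.
  + by move: (h1 Hz).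
  + by case: (h2 Hz).
- rewrite -mulrDl pmulr_lge0 //.
  suff : - r <= zeta by lra.
  rewrite leNgt; apply/negP => H.
  by move: (h5 H).
Qed.

Lemma local_min (R : realType) (n : nat) (Ld : finType) (N : network R n Ld)
  (zeta : R) (sigma sigma' : Ld -> bool) l :
  0 < dbar N l -> switch_cond N zeta sigma l ->
  zeta * dbar N l * (sigma l)%:R + Cd N sigma l <=
  zeta * dbar N l * (sigma' l)%:R + Cd N sigma' l.
Proof.
move=> dp [h1 h2 h3 h4 h5].
have ec : cost N l = (cost N l / dbar N l) * dbar N l by rewrite divfK // gt_eqF.
rewrite /Cd ec.
by apply: aux_min.
Qed.

Lemma sum_edges (R : realType) n (G : rel 'I_n) (f : 'I_n -> 'I_n -> R) :
  \sum_(j < n) \sum_(k | G j k) f j k = \sum_(j < n) \sum_(i | G i j) f i j.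
Proof.
under [RHS]eq_bigr do rewrite big_mkcond.
rewrite exchange_big /=; apply: eq_bigr => i _; by rewrite big_mkcond.
Qed.

Lemma sum_bus (R : realType) (n : nat) (Ld : finType) (N : network R n Ld)
  (F : Ld -> R) :
  \sum_(j < n) \sum_(l | bus N l == j) F l = \sum_l F l.
Proof.
by rewrite [RHS](partition_big (bus N) xpredT).
Qed.

Lemma quad_bound (R : realType) (K a theta : R) :
  0 <= K -> 0 <= theta -> 0 <= a -> a <= theta / K ->
  K * a ^+ 2 / 2 <= 3 * theta ^+ 2 / (2 * K).
Proof.
move=> K0 t0 a0 aK.
have [->|Kn0] := eqVneq K 0.
  by rewrite mul0r mul0r mulr0 invr0 mulr0.
have Kp : 0 < K by rewrite lt0r Kn0.
have h : a ^+ 2 <= (theta / K) ^+ 2 by rewrite !expr2 ler_pM.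
have h2 : K * (theta / K) ^+ 2 / 2 = theta ^+ 2 / (2 * K) by field; rewrite Kn0.
have h3 : K * a ^+ 2 / 2 <= K * (theta / K) ^+ 2 / 2.
  by rewrite ler_pM2r ?invr_gt0 ?ltr0n // ler_pM2l.
rewrite h2 in h3; apply: (le_trans h3).
rewrite ler_pM2r ?invr_gt0 ?mulr_gt0 //.
have : 0 <= theta ^+ 2 by rewrite sqr_ge0.
lra.
Qed.

Theorem proposition1 (R : realType) (n : nat) (Ld : finType)
    (N : network R n Ld) (sigma : Ld -> bool)
    (eta : 'I_n -> 'I_n -> R) (omega pM pc : 'I_n -> R)
    (psi : 'I_n -> 'I_n -> R) (pcs : R) (theta zeta : R) :
  network_ok N ->
  equilibrium N sigma eta omega pM pc psi ->
  (forall j, pc j = pcs) ->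
  (forall j, kap N j = (q N j)^-1) ->
  0 <= theta ->
  pcs - theta / Ksum N <= zeta -> zeta <= pcs ->
  (forall l, switch_cond N zeta sigma l) ->
  eps_optimal N (3 * theta ^+ 2 / (2 * Ksum N)) pM sigma.
Proof.
move=> [[conn _] _ dpos pos _] [e1 e2 e3 e4 e5] hpc hkap th0 hz1 hz2 hsw.
move=> pM' sigma' feas.
have qp j : 0 < q N j by case: (pos j) => _ [_ [_ [_ [_ ]]]].
have kp j : 0 < kap N j by case: (pos j) => _ [_ [ ]].
have Ap j : 0 < Ac N j by case: (pos j) => _ [_ [_ [ ]]].
have Mp j : 0 < Mc N j by case: (pos j).
have gp j : 0 < gam N j by case: (pos j) => _ [ ].
have tp j : 0 < tauN N j by case: (pos j) => _ [_ [_ [_ [ ]]]].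
have qk j : q N j * kap N j = 1 by rewrite hkap divff // gt_eqF.
have hpM j : pM j = kap N j * pcs - kap N j * omega j.
  move: (e3 j) => /eqP; rewrite mulf_eq0 invr_eq0 (gt_eqF (gp j)) orbF.
  move/eqP => H; rewrite hpc in H; lra.
have oc i j : omega i = omega j.
  pose a := [pred x | omega x == omega i].
  have cl : closed [rel x y | E N x y || E N y x] a.
    move=> x y /= /orP [] H; rewrite !inE.
    - by move: (e1 _ _ H) => /eqP; rewrite subr_eq0 => /eqP ->.
    - by move: (e1 _ _ H) => /eqP; rewrite subr_eq0 => /eqP ->.
  have := closed_connect cl (conn i j).
  by rewrite !inE eqxx => /esym /eqP ->.
have sX : \sum_(j < n) (pM j - pL N j - Ac N j * omega j - load_at N sigma j) = 0.
  have X j : pM j - pL N j - Ac N j * omega j - load_at N sigma j =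
     \sum_(k | E N j k) B N j k * eta j k - \sum_(i | E N i j) B N i j * eta i j.
    move: (e2 j) => /eqP; rewrite mulf_eq0 invr_eq0 (gt_eqF (Mp j)) orbF => /eqP H; lra.
  under eq_bigr do rewrite X.
  by rewrite sumrB sum_edges subrr.
have sY : \sum_(j < n) (- pM j + pL N j + load_at N sigma j) = 0.
  have Y j : - pM j + pL N j + load_at N sigma j =
     \sum_(k | Et N j k) psi j k - \sum_(i | Et N i j) psi i j.
    move: (e5 j) => /eqP; rewrite mulf_eq0 invr_eq0 (gt_eqF (tp j)) orbF => /eqP H.
    lra.
  under eq_bigr do rewrite Y.
  by rewrite sumrB sum_edges subrr.
have om0 j : omega j = 0.
  have : \sum_(i < n) Ac N i * omega i = 0.
    have := f_equal2 +%R sX sY; rewrite -big_split /= addr0 => H.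
    have -> : \sum_(i < n) Ac N i * omega i = - \sum_(j < n) ((pM j - pL N j - Ac N j * omega j - load_at N sigma j) + (- pM j + pL N j + load_at N sigma j)).
      by rewrite -sumrN; apply: eq_bigr => i _; lra.
    by rewrite H oppr0.
  under eq_bigr do rewrite (oc _ j).
  rewrite -mulr_suml => /eqP; rewrite mulf_eq0 => /orP [|/eqP //].
  rewrite gt_eqF //.
  apply: lt_le_trans (Ap j) _; rewrite (bigD1 j) //= lerDl.
  by apply: sumr_ge0 => i _; exact: ltW.
have hpM' j : pM j = kap N j * pcs by rewrite hpM om0 mulr0 subr0.
set K := Ksum N.
have c1 : Cost N pM sigma = K * pcs ^+ 2 / 2 + \sum_l Cd N sigma l.
  rewrite /Cost big_split /= sum_bus /K /Ksum; congr (_ + _).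
  rewrite -!mulr_suml; congr (_ * _); rewrite mulr_suml; apply: eq_bigr => j _; rewrite hpM'.
  by rewrite exprMn expr2 !mulrA qk mul1r.
have c2 : zeta * \sum_(j < n) pM' j - zeta ^+ 2 * K / 2 + \sum_l Cd N sigma' l
    <= Cost N pM' sigma'.
  rewrite /Cost big_split /= sum_bus lerD2r.
  have -> : zeta * \sum_(j < n) pM' j - zeta ^+ 2 * K / 2 =
      \sum_(j < n) (zeta * pM' j - zeta ^+ 2 * kap N j / 2).
    by rewrite sumrB mulr_sumr /K /Ksum mulr_sumr mulr_suml.
  apply: ler_sum => j _.
  have e : kap N j * (q N j * pM' j - zeta) ^+ 2 =
     (q N j * kap N j) * q N j * pM' j ^+ 2 - 2 * (q N j * kap N j) * pM' j * zeta
     + zeta ^+ 2 * kap N j by ring.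
  rewrite qk in e.
  have : 0 <= kap N j * (q N j * pM' j - zeta) ^+ 2.
    by rewrite mulr_ge0 ?sqr_ge0 // ltW.
  lra.
have c3 : \sum_(j < n) pM j = K * pcs.
  by under eq_bigr do rewrite hpM'; rewrite -mulr_suml.
have hL s : \sum_(j < n) load_at N s j = \sum_l dbar N l * (s l)%:R.
  by rewrite /load_at sum_bus.
have sPM : \sum_(j < n) pM j = \sum_(j < n) pL N j + \sum_l dbar N l * (sigma l)%:R.
  move: sY; rewrite !big_split /= sumrN hL => H; lra.
have sPM' : \sum_(j < n) pM' j = \sum_(j < n) pL N j + \sum_l dbar N l * (sigma' l)%:R.
  by rewrite feas big_split /= hL.
have loc : zeta * \sum_l dbar N l * (sigma l)%:R + \sum_l Cd N sigma l <=
    zeta * \sum_l dbar N l * (sigma' l)%:R + \sum_l Cd N sigma' l.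
  rewrite !mulr_sumr -!big_split /=; apply: ler_sum => l _.
  rewrite !mulrA; exact: local_min.
have Kge : 0 <= K by rewrite /K /Ksum; apply: sumr_ge0 => j _; exact: ltW.
have Hq' : K * (pcs - zeta) ^+ 2 / 2 <= 3 * theta ^+ 2 / (2 * K).
  by apply: quad_bound => //; lra.
have ex1 : K * (pcs - zeta) ^+ 2 / 2 = K * pcs ^+ 2 / 2 - zeta * (K * pcs) + zeta ^+ 2 * K / 2
  by field.
rewrite -c3 sPM mulrDr in ex1.
rewrite sPM' mulrDr in c2.
rewrite c1; lra.
Qed.
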